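(* Let $a<b$ be real numbers with $\frac{a+b}{2}>0$, let $\mathcal D=U(a,b)$, and let $(N,u)\sim H(n,\mathcal D)$ be a random additively separable hedonic game. Then $$\lim_{n\to\infty}\mathbb P\big((N,u)\text{ admits a Nash-stable partition}\big)=1.$$
   Context: Additively separable hedonic game: a finite agent set $N$ and utilities $u_x(y)\in\mathbb R$ for ordered pairs $x\ne y$; for a coalition $C\ni x$, $u_x(C)=\sum_{y\in C\setminus\{x\}}u_x(y)$ (singleton has utility $0$). Random model $H(n,\mathcal D)$: $|N|=n$ and all $u_x(y)$, $x\ne y$, i.i.d. from $\mathcal D$. A partition $\pi$ of $N$ is Nash-stable if no agent $x$ can strictly increase its utility by moving alone to another coalition of $\pi$ or to a new singleton coalition. *)

(* Defs.v *)
From HB Require Import structures.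
From mathcomp Require Import all_boot all_order all_algebra.
From mathcomp Require Import all_classical all_reals all_analysis.
Set Implicit Arguments. Unset Strict Implicit. Unset Printing Implicit Defensive.
Import Order.TTheory GRing.Theory Num.Theory.
Local Open Scope classical_set_scope.
Local Open Scope ring_scope.

(* u x y = u_x(y); diagonal values u x x are never used. *)
(* Utility of agent x for the coalition C ∪ {x}:  sum_{y in C \ {x}} u_x(y). *)
Definition coal_util (n : nat) (R : numDomainType) (u : 'I_n -> 'I_n -> R)
  (x : 'I_n) (C : {set 'I_n}) : R :=
  \sum_(y in C :\ x) u x y.

(* P is a Nash-stable partition of N = 'I_n: no agent x can strictly gain by
   moving alone to another coalition C of P (utility coal_util u x C), or to a
   new singleton coalition (utility 0). *)
Definition nash_stable (n : nat) (R : numDomainType) (u : 'I_n -> 'I_n -> R)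
  (P : {set {set 'I_n}}) : Prop :=
  finset.partition P [set: 'I_n] /\
  forall x : 'I_n,
    0 <= coal_util u x (finset.pblock P x) /\
    forall C, C \in P -> coal_util u x C <= coal_util u x (finset.pblock P x).

Definition admits_nash_stable (n : nat) (R : numDomainType)
  (u : 'I_n -> 'I_n -> R) : Prop :=
  exists P : {set {set 'I_n}}, nash_stable u P.

Definition offdiag (n : nat) : seq ('I_n * 'I_n) :=
  [seq p <- enum [set: 'I_n * 'I_n] | p.1 != p.2].

(* The utility function encoded by a sample vector s (one coordinate per
   ordered pair x <> y). *)
Definition util_of (n : nat) (R : numDomainType) (s : seq R) :
  'I_n -> 'I_n -> R :=
  fun x y => nth 0 s (index (x, y) (offdiag n)).

(* Expectation of f(X_1, ..., X_m) for X_1, ..., X_m i.i.d. uniform on [a,b]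
   (iterated integral against the library's uniform distribution, i.e. the
   integral against the m-fold product measure). *)
Fixpoint iid_uniform_expect (R : realType) (a b : R) (ab : a < b) (m : nat)
  (f : seq R -> \bar R) {struct m} : \bar R :=
  match m with
  | 0 => f [::]
  | m'.+1 => (\int[uniform_prob ab]_x
                 iid_uniform_expect ab m' (fun s => f (x :: s)))%E
  end.

Definition prob_nash_stable (R : realType) (a b : R) (ab : a < b) (n : nat)
  : \bar R :=
  iid_uniform_expect ab (size (offdiag n))
    (fun s => (\1_[set s' : seq R | admits_nash_stable (@util_of n R s')] s)%:E).

(* Main.v *)
Require Import Defs.
From HB Require Import structures.
From mathcomp Require Import all_boot all_order all_algebra.
From mathcomp Require Import all_classical all_reals all_analysis.
From mathcomp Require Import ring lra.
From mathcomp Require Import measurable_realfun.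
Import Order.TTheory GRing.Theory Num.Theory.
Import numFieldNormedType.Exports.
Local Open Scope classical_set_scope.
Local Open Scope ring_scope.

Lemma lower_le_integral d (T : measurableType d) (R : realType)
  (mu : {measure set T -> \bar R}) (f g : T -> \bar R) :
  (forall x, (f x <= g x)%E) -> (forall x, (0 <= g x)%E) ->
  (\int[mu]_x f x <= \int[mu]_x g x)%E.
Proof.
move=> fg g0.
rewrite integralE.
apply: (@le_trans _ _ (\int[mu]_x f^\+ x - 0)%E).
  apply: leeB => //; apply: integral_ge0 => x _; exact: funeneg_ge0.
rewrite sube0 (ge0_integralTE _ g0) ge0_integralTE; last by move=> x; exact: funepos_ge0.
apply: ereal_sup_le => _ [h /= hf <-]; exists h => //= x.
apply: (le_trans (hf x)).
rewrite funeposE ge_max g0 andbT; exact: fg.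
Qed.

Lemma iid_ge0 (R : realType) (a b : R) (ab : a < b) m (f : seq R -> \bar R) :
  (forall s, (0 <= f s)%E) -> (0 <= iid_uniform_expect ab m f)%E.
Proof.
elim: m f => [|m IH] f f0 /=; first exact: f0.
apply: integral_ge0 => x _; apply: IH => s; exact: f0.
Qed.

Lemma iid_mono (R : realType) (a b : R) (ab : a < b) m (f g : seq R -> \bar R) :
  (forall s, (f s <= g s)%E) -> (forall s, (0 <= g s)%E) ->
  (iid_uniform_expect ab m f <= iid_uniform_expect ab m g)%E.
Proof.
elim: m f g => [|m IH] f g fg g0 /=; first exact: fg.
apply: lower_le_integral => x.
  by apply: IH => s.
by apply: iid_ge0.
Qed.

Section Alg.
Variables (R : realType) (a b : R) (ab : a < b).
Local Notation mu := (uniform_prob ab).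

Definition J (f : R -> R) : R := fine (\int[mu]_x (f x)%:E)%E.
Definition gd (f : R -> R) : Prop :=
  measurable_fun setT f /\ exists M, forall x, `|f x| <= M.

Lemma gd_int f : gd f -> mu.-integrable setT (EFin \o f).
Proof.
move=> [mf [M hM]]; apply: (measurable_bounded_integrable measurableT).
- by apply: (le_lt_trans (probability_le1 (uniform_prob ab) measurableT)); rewrite ltry.
- exact: mf.
exists M; split; first by rewrite num_real.
move=> y My x _; apply: (le_trans (hM x)); exact: ltW.
Qed.

Arguments gd_int {f}.

Lemma intsum K (d : 'I_K -> R) (g : 'I_K -> R -> R) : (forall k, gd (g k)) ->
  (\int[mu]_x (\sum_(k < K) d k * g k x)%:E = (\sum_(k < K) d k * J (g k))%:E)%E.
Proof.
move=> hg.
under eq_integral do rewrite -sumEFin.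
rewrite integral_sum //; last first.
  move=> k.
  have := integrableZl measurableT (d k) (gd_int (hg k)).
  by apply: eq_integrable => // x _ /=; rewrite EFinM.
rewrite -sumEFin; apply: eq_bigr => k _.
under eq_integral do rewrite EFinM.
rewrite (integralZl measurableT (gd_int (hg k))).
rewrite /J EFinM fineK //; exact: (integrable_fin_num _ (gd_int (hg k))).
Qed.

Definition Fs K (c : 'I_K -> R) (h : 'I_K -> nat -> R -> R) m (s : seq R) : R :=
  \sum_(k < K) c k * \prod_(i < m) h k i (nth 0 s i).

Arguments Fs {K}.

Lemma iid_Fs m : forall K c h, (forall (k : 'I_K) i, gd (h k i)) ->
  iid_uniform_expect ab m (fun s => (Fs c h m s)%:E) =
  (\sum_(k < K) c k * \prod_(i < m) J (h k i))%:E.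
Proof.
elim: m => [|m IH] K c h hh /=.
  by rewrite /Fs; congr EFin; apply: eq_bigr => k _; rewrite !big_ord0.
transitivity (\int[mu]_x (\sum_(k < K) (c k * \prod_(i < m) J (h k i.+1)) * h k 0%N x)%:E)%E.
  apply: eq_integral => x _.
  have -> : (fun s => (Fs c h m.+1 (x :: s))%:E) =
     (fun s => (Fs (fun k => c k * h k 0%N x) (fun k i => h k i.+1) m s)%:E).
    apply: funext => s; rewrite /Fs; congr EFin; apply: eq_bigr => k _.
    by rewrite big_ord_recl /= mulrA.
  rewrite IH //; congr EFin; apply: eq_bigr => k _; ring.
rewrite intsum //; congr EFin; apply: eq_bigr => k _.
rewrite big_ord_recl /=; ring.
Qed.

End Alg.
Arguments gd {R}.
Arguments J {R a b} ab f.
Arguments Fs {R K}.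
Lemma ftc_poly (R : realType) (P : {poly R}) (a b : R) : a < b ->
  (\int[lebesgue_measure]_(x in `[a, b]) ((P^`()).[x])%:E =
   (P.[b] - P.[a])%:E)%E.
Proof.
move=> ab.
rewrite (@continuous_FTC2 _ (fun x : R => (P^`()).[x]) (horner P)) //.
- exact/continuous_subspaceT/continuous_horner.
- split.
  + by move=> z _; exact: derivable_horner.
  + by apply: cvg_at_right_filter; exact: continuous_horner.
  + by apply: cvg_at_left_filter; exact: continuous_horner.
- by move=> x _; rewrite -derivE.
Qed.

Lemma ftc_lin (R : realType) (a b c t : R) : a < b ->
  (\int[lebesgue_measure]_(x in `[a, b]) (c - t * x)%:E =
   ((c * b - t * (b * b) / 2) - (c * a - t * (a * a) / 2))%:E)%E.
Proof.
move=> ab.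
pose P : {poly R} := c *: 'X - (t / 2) *: 'X^2.
have hP x : P.[x] = c * x - t * (x * x) / 2.
  by rewrite /P !hornerE /=; ring.
have hP' x : (P^`()).[x] = c - t * x.
  rewrite /P derivB !derivZ derivX derivXn !hornerE /=.
  by field.
rewrite -hP -hP -(@ftc_poly _ P a b ab).
by apply: eq_integral => x _; rewrite hP'.
Qed.
Lemma expR_quad (R : realType) (y : R) : y <= 1/2 -> expR y <= 1 + y + 2 * (y * y).
Proof.
move=> hy.
have h1 := expR_ge1Dx (- y).
have hpos : 0 < 1 - y by lra.
have -> : expR y = (expR (- y))^-1 by rewrite expRN invrK.
apply: (@le_trans _ _ (1 - y)^-1).
  rewrite lef_pV2 ?posrE ?expR_gt0 //; lra.
rewrite -[(1 - y)^-1]mul1r ler_pdivrMr //.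
nra.
Qed.

Section Phi.
Variables (R : realType) (a b : R) (ab : a < b).
Local Notation mu := (uniform_prob ab).

Definition indI (x : R) : R := \1_(`[a, b]) x.
Definition et (t : R) (x : R) : R := indI x * expR (- (t * x)).

Lemma indI_in x : x \in `[a, b] -> indI x = 1.
Proof. by move=> h; rewrite /indI indicE mem_set //. Qed.
Lemma indI_out x : x \notin `[a, b] -> indI x = 0.
Proof. by move=> h; rewrite /indI indicE memNset //; move/negP: h. Qed.

Lemma gd_indI : gd indI.
Proof.
split; first exact: measurable_realfun.measurable_indic.
exists 1 => x; rewrite /indI indicE; case: (_ \in _) => /=; rewrite ?normr1 ?normr0 //.
Qed.

Lemma gd_et t : gd (et t).
Proof.
split.
  apply: measurable_realfun.measurable_funM; first exact: measurable_realfun.measurable_indic.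
  apply: continuous_measurable_fun => x.
  apply: continuous_comp; last exact: continuous_expR.
  have -> : (fun x : R => - (t * x)) = horner ((- t) *: 'X) by apply: funext => y; rewrite !hornerE mulNr.
  exact: continuous_horner.
exists (expR (`|t| * (`|a| + `|b|))) => x.
case: (boolP (x \in `[a, b])) => hx.
  rewrite /et indI_in // mul1r ger0_norm ?expR_ge0 // ler_expR.
  apply: (le_trans (ler_norm _)); rewrite normrN normrM ler_wpM2l //.
  move: hx; rewrite in_itv /= => /andP[hax hxb].
  have h1 := ler_norm b; have h2 := ler_norm (- a); rewrite normrN in h2.
  have h3 := normr_ge0 a; have h4 := normr_ge0 b.
  rewrite ler_norml; apply/andP; split; lra.
by rewrite /et indI_out // mul0r normr0 expR_ge0.
Qed.


Lemma J_indI : J ab indI = 1.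
Proof.
rewrite /J /indI integral_indic //= setIT.
by rewrite /uniform_prob integral_uniform_pdf1.
Qed.

Lemma et_ge0 t x : 0 <= et t x.
Proof. by rewrite /et /indI indicE mulr_ge0 ?expR_ge0. Qed.

Lemma J_et_ge0 t : 0 <= J ab (et t).
Proof. by apply: fine_ge0; apply: integral_ge0 => x _; rewrite lee_fin et_ge0. Qed.

Lemma phi_lt1 : 0 < (a + b) / 2 -> exists t, 0 < t /\ J ab (et t) < 1.
Proof.
move=> hmu.
set mu0 := (a + b) / 2.
set M := `|a| + `|b| + 1.
have h3 := normr_ge0 a; have h4 := normr_ge0 b.
have h1 := ler_norm b; have h2 := ler_norm (- a); rewrite normrN in h2.
have h1' := ler_norm (- b); rewrite normrN in h1'.
have h2' := ler_norm a.
have M1 : 1 <= M by rewrite /M; lra.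
have muM : mu0 <= M by rewrite /mu0 /M; lra.
set t := mu0 / (4 * (M * M)).
have Mne : M != 0 by apply/negP => /eqP M0; rewrite M0 in M1; lra.
have tE : 4 * t * (M * M) = mu0.
  by rewrite /t; field.
have tpos : 0 < t.
  rewrite /t divr_gt0 // mulr_gt0 // mulr_gt0 //; lra.
have tM : 4 * t * M <= 1 by nra.
set c := 1 + 2 * (t * t) * (M * M).
exists t; split => //.
have key : (\int[mu]_x (et t x)%:E <=
   ((b - a)^-1 * ((c * b - t * (b * b) / 2) - (c * a - t * (a * a) / 2)))%:E)%E.
  rewrite integral_uniform //; last first.
    by move=> x; rewrite lee_fin et_ge0.
    by apply/measurable_EFinP; exact: (gd_et t).1.
  rewrite EFinM; apply: lee_wpmul2l; first by rewrite lee_fin invr_ge0 subr_ge0 ltW.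
  rewrite -ftc_lin //.
  apply: ge0_le_integral => //.
  - by move=> x _; rewrite lee_fin et_ge0.
  - by apply/measurable_EFinP; apply: measurable_funTS; exact: (gd_et t).1.
  - apply/measurable_EFinP; apply: measurable_funTS.
    apply: continuous_measurable_fun.
    have -> : (fun x : R => c - t * x) = horner (c%:P - t *: 'X) by apply: funext => y; rewrite !hornerE.
    exact: continuous_horner.
  - move=> x /=; rewrite in_itv /= => /andP[hax hxb].
    rewrite lee_fin /et indI_in; last by rewrite in_itv /= hax hxb.
    rewrite mul1r.
    have hx1 : 0 <= M + x by rewrite /M; lra.
    have hx2 : 0 <= M - x by rewrite /M; lra.
    have p1 := mulr_ge0 (ltW tpos) hx1.
    have p2 := mulr_ge0 hx1 hx2.
    have hy : - (t * x) <= 1 / 2 by nra.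
    apply: (le_trans (@expR_quad _ _ hy)).
    rewrite /c; nra.
have fin : (\int[mu]_x (et t x)%:E)%E \is a fin_num.
  have H := @gd_int _ _ _ ab _ (gd_et t).
  by apply: integrable_fin_num => //; exact: H.
rewrite -(fineK fin) lee_fin in key; rewrite /J.
apply: (le_lt_trans key).
have -> : (b - a)^-1 * (c * b - t * (b * b) / 2 - (c * a - t * (a * a) / 2)) = c - t * mu0.
  by rewrite /mu0; field; rewrite subr_eq0 gt_eqF.
have tMp : 0 < (t * M) * (t * M) by rewrite mulr_gt0 // mulr_gt0 //; lra.
rewrite /c -tE; nra.
Qed.

End Phi.
Arguments indI {R} a b x.
Arguments et {R} a b t x.

Definition rowof (n : nat) (i : nat) : nat :=
  nth n [seq val p.1 | p <- offdiag n] i.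

Lemma offdiag_uniq n : uniq (offdiag n).
Proof. by rewrite /offdiag filter_uniq // enum_uniq. Qed.

Lemma rowsum (R : numDomainType) n (s : seq R) (x : 'I_n) :
  coal_util (util_of s) x [set: 'I_n] =
  \sum_(i < size (offdiag n) | rowof n i == x) nth 0 s i.
Proof.
set F := fun p : 'I_n * 'I_n => nth 0 s (index p (offdiag n)).
transitivity (\sum_(p <- offdiag n | p.1 == x) F p); last first.
  rewrite (big_nth (x, x)) big_mkord; apply: eq_big => i.
    by rewrite /rowof (nth_map (x, x)).
  by move=> _; rewrite /F index_uniq // offdiag_uniq.
rewrite /offdiag big_filter_cond big_enum_cond /=.
rewrite /coal_util.
transitivity (\sum_(i | i == x) \sum_(j | i != j) F (i, j)).
  rewrite big_pred1_eq; apply: eq_bigl => y.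
  by rewrite !inE andbT eq_sym.
rewrite pair_big_dep; apply: eq_big => [p|p _]; last by case: p.
by rewrite in_setT andbC.
Qed.

Lemma count_row n (x : 'I_n) :
  #|[pred i : 'I_(size (offdiag n)) | rowof n i == x]| = n.-1.
Proof.
have := @rowsum int n (nseq (size (offdiag n)) (1 : int)) x.
rewrite /coal_util.
have -> : \sum_(y in [set: 'I_n] :\ x) util_of (nseq (size (offdiag n)) (1:int)) x y =
   \sum_(y in [set: 'I_n] :\ x) 1.
  apply: eq_bigr => y; rewrite !inE andbT => yx.
  rewrite /util_of nth_nseq index_mem ifT //.
  by rewrite /offdiag mem_filter /= mem_enum in_setT andbT eq_sym.
have -> : \sum_(i < size (offdiag n) | rowof n i == x) nth 0 (nseq (size (offdiag n)) (1:int)) i =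
   \sum_(i < size (offdiag n) | rowof n i == x) 1.
  by apply: eq_bigr => i _; rewrite nth_nseq ltn_ord.
rewrite !sumr_const => /eqP; rewrite eqr_nat => /eqP <-.
have h := cardsD1 x [set: 'I_n].
rewrite cardsT card_ord in h.
by rewrite [in RHS]h inE.
Qed.

Lemma grand (R : numDomainType) n (u : 'I_n -> 'I_n -> R) : (0 < n)%N ->
  (forall x, 0 <= coal_util u x [set: 'I_n]%SET) -> admits_nash_stable u.
Proof.
case: n u => // n u _ hu.
set T := [set: 'I_n.+1]%SET.
have triv : finset.trivIset [set T]%SET by rewrite finset.trivIset1.
exists [set T]%SET; split.
  rewrite /finset.partition triv /= finset.cover1 eqxx /= finset.in_set1 eq_sym.
  apply/negP => /eqP h.
  by have := finset.in_setT (@ord0 n); rewrite -/T h inE.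
move=> x.
have -> : finset.pblock [set T]%SET x = T.
  by apply: finset.def_pblock => //; rewrite ?finset.in_set1 ?finset.in_setT.
split => // C; rewrite finset.in_set1 => /eqP ->; exact: lexx.
Qed.

Section Main.
Variables (R : realType) (a b : R) (ab : a < b).
Variables (t : R) (tpos : 0 < t).

Definition cK n (k : 'I_n.+1) : R := if (k : nat) == 0%N then 1 else -1.
Definition hK n (k : 'I_n.+1) (i : nat) : R -> R :=
  if (0 < k)%N && (rowof n i == k.-1) then et a b t else indI a b.

Lemma gd_hK n k i : gd (@hK n k i).
Proof. by rewrite /hK; case: ifP => _; [exact: gd_et | exact: gd_indI]. Qed.

Lemma iid_G n :
  iid_uniform_expect ab (size (offdiag n)) (fun s => (Fs (@cK n) (@hK n) (size (offdiag n)) s)%:E) =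
  (1 - n%:R * (J ab (et a b t)) ^+ n.-1)%:E.
Proof.
rewrite iid_Fs; last by move=> k i; exact: gd_hK.
congr EFin.
rewrite big_ord_recl /cK /= mul1r.
have -> : \prod_(i < size (offdiag n)) J ab (@hK n ord0 i) = 1.
  by apply: big1 => i _; rewrite /hK /= J_indI.
have E x : \prod_(i < size (offdiag n)) J ab (@hK n (lift ord0 x) i) = J ab (et a b t) ^+ n.-1.
  transitivity (\prod_(i < size (offdiag n) | rowof n i == x) J ab (et a b t)).
    rewrite [RHS]big_mkcond; apply: eq_bigr => i _ /=.
    by rewrite /hK /=; case: ifP => //; rewrite J_indI.
  by rewrite prodr_const count_row.
under eq_bigr do rewrite E.
rewrite sumr_const card_ord -mulr_natl; ring.
Qed.


Lemma G_le n (s : seq R) : (0 < n)%N ->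
  ((Fs (@cK n) (@hK n) (size (offdiag n)) s)%:E <=
   (\1_[set s' : seq R | admits_nash_stable (@util_of n R s')] s)%:E)%E.
Proof.
move=> n0.
set m := size (offdiag n).
set A := \prod_(i < m) indI a b (nth 0 s i).
set E := fun x : 'I_n => \prod_(i < m | rowof n i == x) expR (- (t * nth 0 s i)).
have HF : Fs (@cK n) (@hK n) m s = A - \sum_(x < n) A * E x.
  rewrite /Fs big_ord_recl /cK /= mul1r.
  have -> : \prod_(i < m) @hK n ord0 i (nth 0 s i) = A by [].
  rewrite -sumrN; congr (_ + _); apply: eq_bigr => x _ /=.
  rewrite mulN1r; congr (- _).
  rewrite /A /E [X in _ * X]big_mkcond -big_split /=.
  apply: eq_bigr => i _; rewrite /hK /=; case: ifP => _ /=.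
    by [].
  by rewrite mulr1.
have A0 : 0 <= A by apply: prodr_ge0 => i _; rewrite /indI indicE ler0n.
have A1 : A <= 1.
  apply: prodr_ile1 => i _; rewrite /indI indicE ler0n /=.
  by case: (_ \in _).
have E0 x : 0 <= E x by apply: prodr_ge0 => i _; exact: expR_ge0.
have SE : 0 <= \sum_(x < n) E x by apply: sumr_ge0 => x _; exact: E0.
have HF' : Fs (@cK n) (@hK n) m s = A * (1 - \sum_(x < n) E x).
  by rewrite HF mulrBr mulr1 mulr_sumr.
rewrite HF'.
case: (lerP (A * (1 - \sum_(x < n) E x)) 0) => hG.
  apply: (le_trans (y := 0%:E)); first by rewrite lee_fin.
  by rewrite lee_fin indicE ler0n.
have h1 : 0 < 1 - \sum_(x < n) E x.
  rewrite ltNge; apply/negP => h; move: hG; rewrite ltNge => /negP; apply.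
  exact: mulr_ge0_le0.
have adm : admits_nash_stable (@util_of n R s).
  apply: grand => // x.
  rewrite rowsum.
  have Ex1 : E x < 1.
    apply: (le_lt_trans (y := \sum_(y < n) E y)); last by lra.
    rewrite (bigD1 x) //= lerDl; apply: sumr_ge0 => y _; exact: E0.
  move: Ex1; rewrite /E -expR_sum expR_lt1 sumrN -mulr_sumr oppr_lt0.
  by rewrite pmulr_rgt0 // => /ltW.
rewrite indicE mem_set // lee_fin.
have : A * (1 - \sum_(x < n) E x) <= A * 1 by rewrite ler_wpM2l //; lra.
by rewrite mulr1 => h; apply: (le_trans h).
Qed.


Lemma iid_one m : iid_uniform_expect ab m (fun _ => 1%:E) = 1%:E.
Proof.
elim: m => [|m IH] //=.
rewrite IH integral_cst //= mul1e.
by rewrite /uniform_prob integral_uniform_pdf1.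
Qed.

Lemma bound_lo n : (0 < n)%N ->
  ((1 - n%:R * (J ab (et a b t)) ^+ n.-1)%:E <= prob_nash_stable ab n)%E.
Proof.
move=> n0.
rewrite -iid_G /prob_nash_stable; apply: iid_mono => s.
  exact: G_le.
by rewrite lee_fin indicE ler0n.
Qed.

Lemma bound_hi n : (prob_nash_stable ab n <= 1%:E)%E.
Proof.
rewrite -(iid_one (size (offdiag n))) /prob_nash_stable; apply: iid_mono => s //.
by rewrite lee_fin indicE; case: (_ \in _).
Qed.

End Main.

Lemma vbound (R : realType) (q : R) n : 0 <= q -> q < 1 -> (2 <= n)%N ->
  n%:R * q ^+ n.-1 <= (16 / ((1 - q) * (1 - q))) * (n.+1%:R)^-1.
Proof.
move=> q0 q1 n2.
set d := 1 - q.
have d0 : 0 < d by rewrite /d; lra.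
set P := q ^+ n.-1.
set K : R := n.-1%:R.
set N : R := n%:R.
have KN : N = K + 1 by rewrite /N /K natr1 prednK //; apply: ltn_trans n2.
have K1 : 1 <= K by rewrite /K ler1n -ltnS prednK //; apply: ltn_trans n2.
have P0 : 0 <= P by rewrite /P exprn_ge0.
have qe : q <= expR (- d) by have := expR_ge1Dx (- d); rewrite /d; lra.
have Pe : P <= expR (K * - d).
  rewrite expRM_natl /P; apply: lerXn2r => //; rewrite ?nnegrE ?expR_ge0 //.
have eK : 1 + (K * d) ^+ 2 / 2 <= expR (K * d).
  have := @expR_ge1Dxn R (K * d) 1%N; rewrite (_ : (2`!)%N = 2%N) //.
  by move=> h; apply: h; apply: mulr_ge0 => //; lra.
have PD : P * (1 + (K * d) ^+ 2 / 2) <= 1.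
  have : P * expR (K * d) <= 1.
    have := ler_wpM2r (expR_ge0 (K * d)) Pe.
    by rewrite -expRD mulrN addNr expR0.
  apply: le_trans; apply: ler_wpM2l => //.
have W : N * (N + 1) * P * (d * d) <= 16.
  rewrite KN.
  have h2 : P * ((K * d) ^+ 2) <= 2.
    have : P * (1 + (K * d) ^+ 2 / 2) = P + P * ((K * d) ^+ 2) / 2 by ring.
    move=> e; rewrite e in PD; lra.
  have h3 : (K + 1) * (K + 1 + 1) <= 8 * (K * K) by nra.
  have h4 : 0 <= P * (d * d) by apply: mulr_ge0 => //; apply: mulr_ge0; lra.
  have : (K + 1) * (K + 1 + 1) * P * (d * d) <= 8 * (K * K) * (P * (d * d)).
    rewrite -mulrA; apply: ler_wpM2r => //.
  move=> h5; apply: (le_trans h5).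
  have : 8 * (K * K) * (P * (d * d)) = 8 * (P * ((K * d) ^+ 2)) by ring.
  move=> ->; lra.
have N1 : 0 < (n.+1)%:R :> R by rewrite ltr0n.
have -> : (n.+1)%:R = N + 1 :> R by rewrite /N natr1.
have N2 : 0 < N + 1 by rewrite /N natr1 ltr0n.
rewrite ler_pdivlMr // ler_pdivlMr ?mulr_gt0 //.
by have -> : N * P * (N + 1) * (d * d) = N * (N + 1) * P * (d * d) by ring.
Qed.

Theorem proposition3 (R : realType) (a b : R) (ab : a < b) (hpos : 0 < (a + b) / 2) :
  prob_nash_stable ab n @[n --> \oo] --> 1%E.
Proof.
have [t [tpos hq]] := @phi_lt1 R a b ab hpos.
set q := J ab (et a b t) in hq.
have q0 : 0 <= q := @J_et_ge0 R a b ab t.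
set C := 16 / ((1 - q) * (1 - q)).
have hv : (fun n : nat => n%:R * q ^+ n.-1) @ \oo --> (0 : R).
  apply: (@squeeze_cvgr _ _ _ _ (fun _ => 0) (fun n => C * harmonic n)).
  - near=> n; apply/andP; split.
      by apply: mulr_ge0 => //; exact: exprn_ge0.
    apply: vbound => //.
    near: n; exists 2%N => // n /=.
  - exact: cvg_cst.
  - rewrite -(mulr0 C); apply: cvgMr; exact: cvg_harmonic.
apply: (@squeeze_cvge _ _ _ _ (fun n => (1 - n%:R * q ^+ n.-1)%:E) _ (fun _ => 1%:E)).
- near=> n; apply/andP; split.
    apply: bound_lo => //.
    near: n; exists 1%N => // n /=.
  exact: bound_hi.
- apply: cvg_EFin; first by near=> n.
  rewrite -[X in _ --> X]subr0; apply: cvgB; first exact: cvg_cst.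
  exact: hv.
- exact: cvg_cst.
Unshelve. all: by end_near.
Qed.
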